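(* Let $(X,\mathbf h,\Lambda,\widetilde B)$ be a quantum seed, $i\in[1,n]$, and let $X'_i$ be the cluster variable of $\mu_i(X,\mathbf h,\Lambda,\widetilde B)$ in position $i$. For every positive integer $s$, $$(X'_i)^s=V^s_{b^i}\,X(s[-b^i]_+-se_i)\qquad\text{and}\qquad (X'_i)^s=W^s_{b^i}\,X(s[b^i]_+-se_i),$$ where $$V^s_{b^i}=\prod_{k=1}^s\Big(\sum_{l=0}^{d_i}q^{\frac{2k-1}{2}l\tilde d_id_i^{-1}}h_{i,l}\,X(l\beta^i)\Big),\qquad W^s_{b^i}=\prod_{k=1}^s\Big(\sum_{l=0}^{d_i}q^{\frac{1-2k}{2}l\tilde d_id_i^{-1}}h_{i,l}\,X(-l\beta^i)\Big).$$
   Context: Notation: $[a,b]=\{a,a+1,\dots,b\}$; $[x]_+=\max(x,0)$, applied entrywise to vectors; $e_1,\dots,e_m$ is the standard basis of $\mathbb Z^m$. Fix integers $m\ge n\ge 1$. A compatible pair $(\Lambda,\widetilde B)$ consists of an $m\times n$ integer matrix $\widetilde B=(b_{kl})$ and a skew-symmetric $m\times m$ integer matrix $\Lambda$ such that $\Lambda\widetilde B=-\begin{bmatrix}D\\0\end{bmatrix}$ for some $D=\mathrm{diag}(\tilde d_1,\dots,\tilde d_n)$ with all $\tilde d_k\in\mathbb Z_{>0}$. Write $\Lambda(a,b)=a^T\Lambda b$. Fix positive integers $d_1,\dots,d_n$ such that $d_k$ divides every entry of the $k$-th column $b^k$ of $\widetilde B$; $\beta^k=\frac1{d_k}b^k$.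 The quantum torus $\mathcal T(\Lambda)$ is the $\mathbb Z[q^{\pm1/2}]$-algebra with basis $\{X(c)\mid c\in\mathbb Z^m\}$ and multiplication $X(c)X(d)=q^{\frac12\Lambda(c,d)}X(c+d)$; $\mathcal F$ is its skew field of fractions, $X_k=X(e_k)$. For $k\in[1,n]$, $\mathbf h_k=(h_{k,0},\dots,h_{k,d_k})$ with $h_{k,r}\in\mathbb Z[q^{\pm1/2}]$, $h_{k,r}=h_{k,d_k-r}$, $h_{k,0}=h_{k,d_k}=1$. A quantum seed $(X,\mathbf h,\Lambda,\widetilde B)$ consists of these data and the map $X:c\mapsto X(c)$. Its mutation in direction $i$ has cluster variables $X'_k=X_k$ for $k\ne i$ and $X'_i=\sum_{r=0}^{d_i}h_{i,r}X(r[\beta^i]_++(d_i-r)[-\beta^i]_+-e_i)$. *)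

(* Defs.v *)
(* Concrete model of the quantum torus T(Lambda) as a free
   Z[t^{+-1}]-module (t = q^{1/2}) with basis X(c), c in Z^m, given by finite
   formal sums; equality is equality of all coefficients. *)
From HB Require Import structures.
From mathcomp Require Import all_boot all_order all_algebra.
Set Implicit Arguments. Unset Strict Implicit. Unset Printing Implicit Defensive.
Import Order.TTheory GRing.Theory Num.Theory.
Local Open Scope ring_scope.

(* Elements of Z[q^{+-1/2}] : finite formal sums of (a, j) meaning a * t^j,
   t = q^{1/2}. *)
Definition laurent := seq (int * int).
Definition lcoef (h : laurent) (j : int) : int := \sum_(x <- h | x.2 == j) x.1.
Definition laurent_eq (h h' : laurent) : Prop := forall j, lcoef h j = lcoef h' j.
Definition laurent_one : laurent := [:: (1, 0)].

(* Elements of T(Lambda): finite formal sums of (a, j, c) meaning a t^j X(c). *)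
Definition qterm (m : nat) := (int * int * 'rV[int]_m)%type.
Definition qtor (m : nat) := seq (qterm m).
Definition qcoef m (p : qtor m) (j : int) (c : 'rV[int]_m) : int :=
  \sum_(x <- p | (x.1.2 == j) && (x.2 == c)) x.1.1.
Definition qt_eq m (p p' : qtor m) : Prop :=
  forall j c, qcoef p j c = qcoef p' j c.

Definition lam m (L : 'M[int]_m) (c d : 'rV[int]_m) : int := (c *m L *m d^T) 0 0.

(* multiplication X(c)X(d) = q^{Lambda(c,d)/2} X(c+d), extended bilinearly *)
Definition qmul m (L : 'M[int]_m) (p p' : qtor m) : qtor m :=
  [seq (x.1.1 * y.1.1, x.1.2 + y.1.2 + lam L x.2 y.2, x.2 + y.2) | x <- p, y <- p'].
Definition qone m : qtor m := [:: (1, 0, 0)].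
Definition qX m (c : 'rV[int]_m) : qtor m := [:: (1, 0, c)].
Definition qscal m (h : laurent) (j : int) (c : 'rV[int]_m) : qtor m :=
  [seq (x.1, x.2 + j, c) | x <- h].
Definition qpow m (L : 'M[int]_m) (p : qtor m) (s : nat) : qtor m :=
  iter s (qmul L p) (qone m).
Definition qprod m (L : 'M[int]_m) (ps : seq (qtor m)) : qtor m :=
  foldr (qmul L) (qone m) ps.

Definition pospart m (v : 'rV[int]_m) : 'rV[int]_m := map_mx (fun x => Num.max x 0) v.
(* standard basis vector e_i of Z^m, for i in [1,n] (0-indexed) *)
Definition evec m n (i : 'I_n) : 'rV[int]_m := \row_(k < m) (if (k : nat) == i then 1 else 0).
Definition bcol m n (B : 'M[int]_(m, n)) (l : 'I_n) : 'rV[int]_m := \row_(k < m) B k l.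
Definition beta m n (B : 'M[int]_(m, n)) (d : 'I_n -> nat) (l : 'I_n) : 'rV[int]_m :=
  \row_(k < m) (B k l %/ (d l)%:Z)%Z.

Definition compatible m n (L : 'M[int]_m) (B : 'M[int]_(m, n)) (dt : 'I_n -> int) : Prop :=
  L^T = - L /\ (forall l, 0 < dt l) /\
  (forall (k : 'I_m) (l : 'I_n), (L *m B) k l = if (k : nat) == l then - dt l else 0).

Definition good_d m n (B : 'M[int]_(m, n)) (d : 'I_n -> nat) : Prop :=
  (forall l, (0 < d l)%N) /\ (forall k l, ((d l)%:Z %| B k l)%Z).

Definition good_h n (d : 'I_n -> nat) (h : 'I_n -> nat -> laurent) : Prop :=
  forall k, [/\ forall r, (r <= d k)%N -> laurent_eq (h k r) (h k (d k - r)%N),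
              laurent_eq (h k 0) laurent_one & laurent_eq (h k (d k)) laurent_one].

Definition mut_var m n (B : 'M[int]_(m, n)) (d : 'I_n -> nat) (h : 'I_n -> nat -> laurent)
  (i : 'I_n) : qtor m :=
  flatten [seq qscal (h i r) 0
             (pospart (beta B d i) *+ r + pospart (- beta B d i) *+ (d i - r)%N - evec m i)
          | r <- iota 0 (d i).+1].

Definition Vfac m n (B : 'M[int]_(m, n)) (d : 'I_n -> nat) (dt : 'I_n -> int)
  (h : 'I_n -> nat -> laurent) (i : 'I_n) (k : nat) : qtor m :=
  flatten [seq qscal (h i l) (((2 * k%:Z - 1) * l%:Z * dt i) %/ (d i)%:Z)%Z (beta B d i *+ l)
          | l <- iota 0 (d i).+1].
Definition Wfac m n (B : 'M[int]_(m, n)) (d : 'I_n -> nat) (dt : 'I_n -> int)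
  (h : 'I_n -> nat -> laurent) (i : 'I_n) (k : nat) : qtor m :=
  flatten [seq qscal (h i l) (((1 - 2 * k%:Z) * l%:Z * dt i) %/ (d i)%:Z)%Z (- beta B d i *+ l)
          | l <- iota 0 (d i).+1].

Definition Vs m n (L : 'M[int]_m) B d dt h (i : 'I_n) (s : nat) : qtor m :=
  qprod L [seq Vfac B d dt h i k | k <- iota 1 s].
Definition Ws m n (L : 'M[int]_m) B d dt h (i : 'I_n) (s : nat) : qtor m :=
  qprod L [seq Wfac B d dt h i k | k <- iota 1 s].

(* Main.v *)
Require Import Defs.
From HB Require Import structures.
From mathcomp Require Import all_boot all_order all_algebra zify ring lra.
Set Implicit Arguments. Unset Strict Implicit. Unset Printing Implicit Defensive.
Import Order.TTheory GRing.Theory Num.Theory.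
Local Open Scope ring_scope.

Section Gen.
Variables (m : nat) (L : 'M[int]_m).

Lemma intMn (x : int) (k : nat) : x *+ k = x * k%:Z.
Proof. by rewrite -mulr_natr natz. Qed.

Lemma lamDl u u' v : lam L (u + u') v = lam L u v + lam L u' v.
Proof. by rewrite /lam !mulmxDl !mxE. Qed.
Lemma lamDr u v v' : lam L u (v + v') = lam L u v + lam L u v'.
Proof. by rewrite /lam linearD /= !mulmxDr !mxE. Qed.
Lemma lam0l v : lam L 0 v = 0.
Proof. by rewrite /lam !mul0mx mxE. Qed.
Lemma lam0r v : lam L v 0 = 0.
Proof. by rewrite /lam linear0 mulmx0 mxE. Qed.
Lemma lamNr u v : lam L u (- v) = - lam L u v.
Proof. by apply/eqP; rewrite -subr_eq0 opprK -lamDr addNr lam0r. Qed.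
Lemma lamNl u v : lam L (- u) v = - lam L u v.
Proof. by apply/eqP; rewrite -subr_eq0 opprK -lamDl addNr lam0l. Qed.
Lemma lamMnr u v k : lam L u (v *+ k) = lam L u v *+ k.
Proof. elim: k => [|k IH]; first by rewrite !mulr0n lam0r. by rewrite !mulrS lamDr IH. Qed.
Lemma lamMnl u v k : lam L (u *+ k) v = lam L u v *+ k.
Proof. elim: k => [|k IH]; first by rewrite !mulr0n lam0l. by rewrite !mulrS lamDl IH. Qed.

Definition qF (x y : qterm m) : qterm m :=
  (x.1.1 * y.1.1, x.1.2 + y.1.2 + lam L x.2 y.2, x.2 + y.2).

Lemma qmul_cons x p q : qmul L (x :: p) q = map (qF x) q ++ qmul L p q.
Proof. by []. Qed.
Lemma qmul_nil q : qmul L [::] q = [::].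
Proof. by []. Qed.
Lemma qmul_catl p p' q : qmul L (p ++ p') q = qmul L p q ++ qmul L p' q.
Proof. by elim: p => [//|x p IH]; rewrite cat_cons !qmul_cons IH catA. Qed.
Lemma qmul_r1 p y : qmul L p [:: y] = map (qF^~ y) p.
Proof. by elim: p => [//|x p IH]; rewrite qmul_cons IH. Qed.

Lemma qF_assoc x y z : qF (qF x y) z = qF x (qF y z).
Proof.
rewrite /qF /= lamDl lamDr mulrA !addrA; congr (_, _, _); lia.
Qed.

Lemma qmul_mapl x q r : qmul L (map (qF x) q) r = map (qF x) (qmul L q r).
Proof.
elim: q => [//|y q IH]; rewrite /= qmul_cons IH map_cat -map_comp.
by congr (_ ++ _); apply: eq_map => z /=; rewrite qF_assoc.
Qed.

Lemma qmulA p q r : qmul L (qmul L p q) r = qmul L p (qmul L q r).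
Proof.
elim: p => [//|x p IH]; by rewrite !qmul_cons qmul_catl qmul_mapl IH.
Qed.

Lemma qcoef_cat (p p' : qtor m) j c : qcoef (p ++ p') j c = qcoef p j c + qcoef p' j c.
Proof. by rewrite /qcoef big_cat. Qed.

Lemma qcoef_mul_r p r j c : qcoef (qmul L p r) j c =
  \sum_(x <- p) x.1.1 * qcoef r (j - x.1.2 - lam L x.2 (c - x.2)) (c - x.2).
Proof.
elim: p => [|x p IH]; first by rewrite /qcoef /qmul /= !big_nil.
rewrite qmul_cons qcoef_cat IH big_cons; congr (_ + _).
rewrite /qcoef big_map big_distrr /= [RHS]big_mkcond [LHS]big_mkcond /=.
apply: eq_bigr => y _.
have -> : (x.2 + y.2 == c) = (y.2 == c - x.2).
  by rewrite [RHS]eq_sym subr_eq eq_sym addrC.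
case: (eqVneq y.2 (c - x.2)) => [E|NE]; last by rewrite !andbF.
rewrite !andbT E.
have -> : (x.1.2 + y.1.2 + lam L x.2 (c - x.2) == j) = (y.1.2 == j - x.1.2 - lam L x.2 (c - x.2)).
  by apply/idP/idP => /eqP H; apply/eqP; lia.
by case: ifP => // _; rewrite mulr0.
Qed.

Lemma qcoef_mul_l_aux p y j c :
  \sum_(x <- p) (if (x.1.2 + y.1.2 + lam L x.2 y.2 == j) && (x.2 + y.2 == c) then x.1.1 * y.1.1 else 0)
  = qcoef p (j - y.1.2 - lam L (c - y.2) y.2) (c - y.2) * y.1.1.
Proof.
rewrite /qcoef big_distrl /= [RHS]big_mkcond /=; apply: eq_bigr => x _.
have -> : (x.2 + y.2 == c) = (x.2 == c - y.2).
  by rewrite [RHS]eq_sym subr_eq eq_sym.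
case: (eqVneq x.2 (c - y.2)) => [E|NE]; last by rewrite !andbF ?mul0r.
rewrite !andbT E.
have -> : (x.1.2 + y.1.2 + lam L (c - y.2) y.2 == j) = (x.1.2 == j - y.1.2 - lam L (c - y.2) y.2).
  by apply/idP/idP => /eqP H; apply/eqP; lia.
by case: ifP => // _; rewrite mul0r.
Qed.

Lemma qcoef_mul_l p r j c : qcoef (qmul L p r) j c =
  \sum_(y <- r) qcoef p (j - y.1.2 - lam L (c - y.2) y.2) (c - y.2) * y.1.1.
Proof.
rewrite /qcoef /qmul big_flatten big_map big_mkcond /=.
rewrite (eq_bigr (fun x => \sum_(y <- r) if (x.1.2 + y.1.2 + lam L x.2 y.2 == j) && (x.2 + y.2 == c) then x.1.1 * y.1.1 else 0)); last first.
  by move=> x _; rewrite big_map big_mkcond.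
rewrite exchange_big.
under eq_bigr => y _ do rewrite qcoef_mul_l_aux.
by [].
Qed.

Lemma qmul_congl p p' r : qt_eq p p' -> qt_eq (qmul L p r) (qmul L p' r).
Proof. by move=> H j c; rewrite !qcoef_mul_l; apply: eq_bigr => y _; rewrite H. Qed.
Lemma qmul_congr p r r' : qt_eq r r' -> qt_eq (qmul L p r) (qmul L p r').
Proof. by move=> H j c; rewrite !qcoef_mul_r; apply: eq_bigr => y _; rewrite H. Qed.

Lemma qpow_cong p p' s : qt_eq p p' -> qt_eq (qpow L p s) (qpow L p' s).
Proof.
move=> H; elim: s => [//|s IH] j c /=.
by rewrite (qmul_congl _ H) (qmul_congr _ IH).
Qed.

End Gen.

Section Pow.
Variables (m : nat) (L : 'M[int]_m) (Y : nat -> qtor m) (a : 'rV[int]_m).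
Hypothesis Haa : lam L a a = 0.
Hypothesis HY : forall k, qmul L (qX a) (Y k) = qmul L (Y k.+1) (qX a).

Lemma qprod_cons p ps : qprod L (p :: ps) = qmul L p (qprod L ps).
Proof. by []. Qed.

Lemma comm_prod s : forall k0, qmul L (qX a) (qprod L [seq Y k | k <- iota k0 s]) =
  qmul L (qprod L [seq Y k | k <- iota k0.+1 s]) (qX a).
Proof.
elim: s => [|s IH] k0.
  by rewrite /= /qmul /qone /qX /= lam0l lam0r !mulr1 !addr0 add0r.
have E k : [seq Y k | k <- iota k s.+1] = Y k :: [seq Y k | k <- iota k.+1 s] by [].
by rewrite !E !qprod_cons -qmulA HY !qmulA IH.
Qed.

Lemma XaXsa s : qmul L (qX a) (qX (a *+ s)) = qX (a *+ s.+1).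
Proof. by rewrite /qmul /qX /= lamMnr Haa mul0rn mulr1 !addr0 mulrS. Qed.

Lemma pow_main s : qpow L (qmul L (Y 1) (qX a)) s =
  qmul L (qprod L [seq Y k | k <- iota 1 s]) (qX (a *+ s)).
Proof.
elim: s => [|s IH].
  by rewrite /= /qmul /qone /qX /= lam0l mulr1 !addr0.
have E : [seq Y k | k <- iota 1 s.+1] = Y 1 :: [seq Y k | k <- iota 2 s] by [].
rewrite [LHS]/= -/(qpow L _ s) IH E qprod_cons.
rewrite qmulA -(qmulA _ (qX a)) comm_prod (qmulA _ _ (qX a)) XaXsa.
by rewrite [RHS]qmulA.
Qed.
End Pow.

Lemma qcoef_flat m (H : nat -> laurent) (V : nat -> 'rV[int]_m) s j c :
  qcoef (flatten [seq qscal (H r) 0 (V r) | r <- s]) j c =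
  \sum_(r <- s) (if V r == c then lcoef (H r) j else 0).
Proof.
rewrite /qcoef big_flatten big_map; apply: eq_bigr => r _.
rewrite /qscal big_map /lcoef /=; case: eqP => _.
  by apply: eq_bigl => x /=; rewrite addr0 andbT.
by rewrite big_pred0 // => x; rewrite andbF.
Qed.

Section Spec.
Variables (m n : nat) (hnm : (n <= m)%N) (L : 'M[int]_m) (B : 'M[int]_(m, n))
  (dt : 'I_n -> int) (d : 'I_n -> nat) (h : 'I_n -> nat -> laurent) (i : 'I_n).
Hypotheses (hcomp : compatible L B dt) (hd : good_d B d).

Let ii : 'I_m := widen_ord hnm i.
Let bet := beta B d i.
Let w := L *m bet^T.

Lemma eq_ii (k : 'I_m) : ((k : nat) == i) = (k == ii).
Proof. by []. Qed.

Lemma dpos : (0 < (d i)%:Z).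
Proof. by case: hd => H _; have := H i; lia. Qed.

Lemma bcolE : bcol B i = bet *+ d i.
Proof.
apply/rowP => k; rewrite !mxE mulmxnE !mxE intMn divzK //.
by case: hd => _ H; apply: H.
Qed.

Lemma Lbet k : w k 0 * (d i)%:Z = if k == ii then - dt i else 0.
Proof.
case: hcomp => _ [_ H]; rewrite -eq_ii -H !mxE big_distrl /=.
apply: eq_bigr => j _; rewrite !mxE -mulrA divzK //.
by case: hd => _ H'; apply: H'.
Qed.

Let g := - w ii 0.

Lemma dtE : dt i = g * (d i)%:Z.
Proof. by have := Lbet ii; rewrite eqxx /g mulNr => ->; rewrite opprK. Qed.

Lemma w0 k : k != ii -> w k 0 = 0.
Proof.
move=> /negPf Hk; have := Lbet k; rewrite Hk => /eqP; rewrite mulf_eq0 => /orP [/eqP //|].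
by have := dpos; lia.
Qed.

Lemma lam_bet u : lam L u bet = u 0 ii * - g.
Proof.
rewrite /lam -mulmxA mxE (bigD1 ii) //= big1 ?addr0 /g ?opprK //.
by move=> k Hk; rewrite w0 // mulr0.
Qed.

Lemma lam_skew u v : lam L v u = - lam L u v.
Proof.
case: hcomp => HL _.
rewrite /lam; transitivity (((v *m L *m u^T)^T) 0 0); first by rewrite [RHS]mxE.
by rewrite !trmx_mul trmxK HL mulmxA mulmxN mulNmx mxE.
Qed.

Lemma lam_betl u : lam L bet u = u 0 ii * g.
Proof. by rewrite lam_skew lam_bet mulrN opprK. Qed.

Lemma gpos : 0 < g.
Proof. case: hcomp => _ [H _]; have := H i; rewrite dtE; have := dpos; nia. Qed.

Lemma bet_ii : bet 0 ii = 0.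
Proof.
have H : lam L bet bet = 0.
  by have := lam_skew bet bet; lia.
move: H; rewrite lam_bet; have := gpos; nia.
Qed.

Lemma Ediv (z : int) : ((z * dt i) %/ (d i)%:Z)%Z = z * g.
Proof. by rewrite dtE mulrA mulzK //; have := dpos; lia. Qed.


Let a := pospart (- bet) *+ d i - evec m i.

Lemma a_ii : a 0 ii = -1.
Proof. have := bet_ii; rewrite mxE => Hb. by rewrite !mxE mulmxnE !mxE Hb /= eqxx oppr0 intMn; lia. Qed.

Lemma lam_aa : lam L a a = 0.
Proof. by have := lam_skew a a; lia. Qed.

Lemma VHY k : qmul L (qX a) (Vfac B d dt h i k) = qmul L (Vfac B d dt h i k.+1) (qX a).
Proof.
rewrite /qX qmul_cons qmul_nil cats0 qmul_r1 /Vfac !map_flatten -!map_comp.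
congr flatten; apply: eq_map => l /=; rewrite /qscal -!map_comp; apply: eq_map => x /=.
rewrite /qF /= !Ediv lamMnr lamMnl lam_bet lam_betl a_ii !intMn.
congr (_, _, _); [by rewrite mul1r mulr1 | nia | by rewrite addrC].
Qed.

Lemma V_mut : mut_var B d h i = qmul L (Vfac B d dt h i 1) (qX a).
Proof.
rewrite /mut_var qmul_r1 /Vfac map_flatten -map_comp; congr flatten.
apply/eq_in_map => r; rewrite mem_iota => /andP [_ Hr] /=.
rewrite /qscal -map_comp; apply: eq_map => x /=.
rewrite /qF /= Ediv lamMnl lam_betl a_ii !intMn.
congr (_, _, _); [by rewrite mulr1 | nia |].
apply/rowP => k; rewrite !mxE !mulmxnE !mxE !intMn; nia.
Qed.

Lemma targetV s : pospart (- bcol B i) *+ s - evec m i *+ s = a *+ s.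
Proof.
rewrite bcolE; apply/rowP => k; rewrite !mxE !mulmxnE !mxE !mulmxnE !mxE !intMn.
have := dpos; nia.
Qed.


Lemma mainV s : qt_eq (qpow L (mut_var B d h i) s)
  (qmul L (Vs L B d dt h i s) (qX (pospart (- bcol B i) *+ s - evec m i *+ s))).
Proof. by rewrite V_mut targetV (pow_main lam_aa VHY). Qed.

Let a' := pospart bet *+ d i - evec m i.

Lemma a'_ii : a' 0 ii = -1.
Proof. have := bet_ii; rewrite mxE => Hb. by rewrite !mxE mulmxnE !mxE Hb /= eqxx intMn; lia. Qed.

Lemma lam_a'a' : lam L a' a' = 0.
Proof. by have := lam_skew a' a'; lia. Qed.

Lemma WHY k : qmul L (qX a') (Wfac B d dt h i k) = qmul L (Wfac B d dt h i k.+1) (qX a').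
Proof.
rewrite /qX qmul_cons qmul_nil cats0 qmul_r1 /Wfac !map_flatten -!map_comp.
congr flatten; apply: eq_map => l /=; rewrite /qscal -!map_comp; apply: eq_map => x /=.
rewrite /qF /= !Ediv !(lamMnr, lamMnl, lamNr, lamNl) lam_bet lam_betl a'_ii !intMn.
congr (_, _, _); [by rewrite mul1r mulr1 | nia | by rewrite addrC].
Qed.

Lemma W1E : qmul L (Wfac B d dt h i 1) (qX a') =
  flatten [seq qscal (h i l) 0 (a' - bet *+ l) | l <- iota 0 (d i).+1].
Proof.
rewrite qmul_r1 /Wfac map_flatten -map_comp; congr flatten.
apply: eq_map => l /=; rewrite /qscal -map_comp; apply: eq_map => x /=.
rewrite /qF /= Ediv !(lamMnl, lamNl) lam_betl a'_ii !intMn.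
congr (_, _, _); [by rewrite mulr1 | nia |].
by rewrite addrC mulNrn.
Qed.

Lemma mutW : mut_var B d h i =
  flatten [seq qscal (h i r) 0 (a' - bet *+ (d i - r)) | r <- iota 0 (d i).+1].
Proof.
rewrite /mut_var; congr flatten; apply/eq_in_map => r; rewrite mem_iota => /andP [_ Hr] /=.
congr qscal; apply/rowP => k; rewrite !mxE !mulmxnE !mxE !intMn; nia.
Qed.

Lemma targetW s : pospart (bcol B i) *+ s - evec m i *+ s = a' *+ s.
Proof.
rewrite bcolE; apply/rowP => k; rewrite !mxE !mulmxnE !mxE !mulmxnE !mxE !intMn.
have := dpos; nia.
Qed.


Hypothesis hh : good_h d h.

Lemma W_mut : qt_eq (mut_var B d h i) (qmul L (Wfac B d dt h i 1) (qX a')).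
Proof.
move=> j c; rewrite W1E mutW !qcoef_flat.
set F := fun l => if a' - bet *+ l == c then lcoef (h i l) j else 0.
rewrite (eq_big_seq (fun r => F (d i - r)%N)); last first.
  move=> r; rewrite mem_iota => /andP [_ Hr]; rewrite /F.
  case: (hh i) => Hs _ _; rewrite (Hs r) //.
change (\sum_(0 <= r < (d i).+1) F (d i - r)%N = \sum_(0 <= l < (d i).+1) F l).
rewrite big_nat_rev /=; apply: eq_big_nat => r Hr; congr F; lia.
Qed.

Lemma mainW s : qt_eq (qpow L (mut_var B d h i) s)
  (qmul L (Ws L B d dt h i s) (qX (pospart (bcol B i) *+ s - evec m i *+ s))).
Proof.
move=> j c; rewrite targetW (qpow_cong _ s W_mut j c).
by rewrite (pow_main lam_a'a' WHY).
Qed.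

End Spec.


Theorem lemma4p1 (m n : nat) (hn : (1 <= n)%N) (hnm : (n <= m)%N)
  (L : 'M[int]_m) (B : 'M[int]_(m, n)) (dt : 'I_n -> int)
  (d : 'I_n -> nat) (h : 'I_n -> nat -> laurent)
  (hcomp : compatible L B dt) (hd : good_d B d) (hh : good_h d h)
  (i : 'I_n) (s : nat) (hs : (0 < s)%N) :
  qt_eq (qpow L (mut_var B d h i) s)
        (qmul L (Vs L B d dt h i s)
           (qX (pospart (- bcol B i) *+ s - evec m i *+ s)))
  /\
  qt_eq (qpow L (mut_var B d h i) s)
        (qmul L (Ws L B d dt h i s)
           (qX (pospart (bcol B i) *+ s - evec m i *+ s))).
Proof.
split.
- exact: mainV.
- exact: mainW.
Qed.
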